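(* Let $s>0$, $Y>3s$, and for $\tau\geq 0$ put $x_+(\tau)=\frac sYe^{s\tau}$, $\tau^*=\frac1s\ln\left(\frac Y{3s}\right)$, $\tau_c=\frac1s\ln\left(\frac Ys\right)$. Consider the delay system $\dot x=x(1-x)-yx$, $\dot y=-sy+Ye^{-s\tau}y(t-\tau)x(t-\tau)$, its coexistence equilibrium $E_+=(x_+(\tau),1-x_+(\tau))$ (positive for $\tau\in[0,\tau_c)$), and the characteristic equation of its linearization at $E_+$, \[ \lambda^2+s\left(1+\tfrac{e^{s\tau}}{Y}\right)\lambda+\left(-s\lambda+s\left(1-\tfrac{2se^{s\tau}}{Y}\right)\right)e^{-\lambda\tau}+\tfrac{s^2e^{s\tau}}{Y}=0. \tag{C} \] Define on $[0,\tau^*]$ \[ \omega_+(\tau)=\sqrt{\tfrac12\left(-x_+(\tau)^2+\sqrt{x_+(\tau)^4+s^2\left(12x_+(\tau)^2-16x_+(\tau)+4\right)}\right)}, \] \[ h_2(\omega,\tau)=\frac{\omega^2(1+s-x_+(\tau))-(1-2x_+(\tau))s\,x_+(\tau)}{s\left((1-2x_+(\tau))^2+\omega^2\right)},\qquad \theta(\tau)=\arccos\big(h_2(\omega_+(\tau),\tau)\big), \] and for each integer $n\geq0$ let $\tau_n^1<\dots<\tau_n^{j_n}$ be the points $\tau\in(0,\tau^* )$ with $\tau\omega_+(\tau)=\theta(\tau)+2n\pi$. Assume there exists an integer $N\geq0$ such that $(2N+1)\pi\leq\max_{\tau\in[0,\tau^*]}\tau\omega_+(\tau)\leq2(N+1)\pi$.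 Then: \begin{enumerate} \item For $0\leq n\leq N$, the curves $\theta(\tau)+2n\pi$ and $\tau\omega_+(\tau)$ intersect at least twice in $(0,\tau^* )$. \item For $n\geq N+1$, the curves $\theta(\tau)+2n\pi$ and $\tau\omega_+(\tau)$ do not intersect in $(0,\tau^* )$. \item If $\theta(\tau)+2n\pi$ and $\tau\omega_+(\tau)$ intersect for some $n\geq0$, then $\tau_0^1$ is the smallest and $\tau_0^{j_0}$ the largest value of $\tau$ for which (C) has a pair of purely imaginary roots. \item $E_+$ is locally asymptotically stable for $\tau\in[0,\tau_0^1)\cup(\tau_0^{j_0},\tau_c)$. \end{enumerate}
   Context: Local asymptotic stability of $E_+$ means all roots of (C) have negative real part. *)

(* Defs.v *)
From Stdlib Require Import Reals.
From Coquelicot Require Import Coquelicot.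
Open Scope R_scope.

Definition xplus (s Y tau : R) : R := s / Y * exp (s * tau).
Definition tau_star (s Y : R) : R := / s * ln (Y / (3 * s)).
Definition tau_c (s Y : R) : R := / s * ln (Y / s).

Definition omega_plus (s Y tau : R) : R :=
  let x := xplus s Y tau in
  sqrt (/ 2 * (- x ^ 2 + sqrt (x ^ 4 + s ^ 2 * (12 * x ^ 2 - 16 * x + 4)))).

Definition h2 (s Y w tau : R) : R :=
  let x := xplus s Y tau in
  (w ^ 2 * (1 + s - x) - (1 - 2 * x) * s * x) / (s * ((1 - 2 * x) ^ 2 + w ^ 2)).

Definition theta (s Y tau : R) : R := acos (h2 s Y (omega_plus s Y tau) tau).

Definition cexp (z : C) : C := (exp (Re z) * cos (Im z), exp (Re z) * sin (Im z)).

Definition charC (s Y tau : R) (l : C) : C :=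
  Cplus (Cplus (Cplus (Cmult l l) (Cmult (RtoC (s * (1 + exp (s * tau) / Y))) l))
    (Cmult (Cplus (Cmult (RtoC (- s)) l) (RtoC (s * (1 - 2 * s * exp (s * tau) / Y))))
       (cexp (Cmult (RtoC (- tau)) l))))
  (RtoC (s ^ 2 * exp (s * tau) / Y)).

Definition crossing (s Y : R) (n : nat) (tau : R) : Prop :=
  0 < tau < tau_star s Y /\
  tau * omega_plus s Y tau = theta s Y tau + 2 * INR n * PI.

(* (C) has a pair of purely imaginary roots +- i w, w > 0 (roots of a
   real-coefficient equation come in conjugate pairs) *)
Definition has_imag_pair (s Y tau : R) : Prop :=
  exists w : R, 0 < w /\ charC s Y tau (0, w) = RtoC 0.

Definition E_plus_LAS (s Y tau : R) : Prop :=
  forall l : C, charC s Y tau l = RtoC 0 -> Re l < 0.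

(* Main.v *)
Require Import Defs.
From Stdlib Require Import Reals Lra Psatz Classical.
From Coquelicot Require Import Coquelicot.
Open Scope R_scope.

Definition p1 (s x : R) u v := u^2 - v^2 + (s+x)*u + s*x.
Definition p2 (s x : R) u v := 2*u*v + (s+x)*v.
Definition q1 (s x : R) u (v:R) := -s*u + s*(1-2*x).
Definition q2 (s x : R) (u:R) v := -s*v.
Definition Nre (s x : R) u v := -(q1 s x u v * p1 s x u v + q2 s x u v * p2 s x u v).
Definition Nim (s x : R) u v := -(q2 s x u v * p1 s x u v - q1 s x u v * p2 s x u v).
Definition F0 (s x : R) v := v^4 + x^2*v^2 + s^2*(3*x-1)*(1-x).
Definition cross a1 a2 b1 b2 := a1*b2 - a2*b1.
Definition Hx (s x : R) u v := u^2*(v^2-s*(1-x)-x*(1-2*x))+u*(-2*(1-2*x)*v^2-s^2*(1-x)+s*(1-x)*(1-3*x)+x*(1-2*x)*(1-3*x))+v^4+2*(1-2*x)^2*v^2+s^2*(1-x)*(1-3*x)+x^2*(1-2*x)^2.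
Definition qq (s x : R) w v := (s*x*(1-2*x) - w^2*(s+1-x))*v^2 - w*(1-x)*(s^2+s*(1-x)+x*(1-2*x))*v + s*x*(1-2*x)*(w^2-s*(1-x)-x*(1-2*x)).

Lemma PQ_diff s x u v : (p1 s x u v)^2 + (p2 s x u v)^2 - ((q1 s x u v)^2 + (q2 s x u v)^2) =
  F0 s x v + (u^4 + 2*u^3*s + 2*u^3*x + 2*u^2*v^2 + 4*u^2*s*x + u^2*x^2 + 2*u*v^2*s + 2*u*v^2*x + 2*u*s^2*(1-x) + 2*u*s*x^2).
Proof. unfold p1,p2,q1,q2,F0. ring. Qed.

Lemma cross_bc s x u v : cross (Nre s x 0 v) (Nim s x 0 v) (Nre s x u v) (Nim s x u v) = s^2*u*v*Hx s x u v.
Proof. unfold cross,Nre,Nim,p1,p2,q1,q2,Hx. ring. Qed.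

Lemma cross_ab s x w v : cross (Nre s x 0 w) (Nim s x 0 w) (Nre s x 0 v) (Nim s x 0 v) = s^2*(v-w)*qq s x w v.
Proof. unfold cross,Nre,Nim,p1,p2,q1,q2,qq. ring. Qed.

Lemma Nim0 s x v : Nim s x 0 v = s*v*(s*(1-x)+x*(1-2*x)-v^2).
Proof. unfold Nim,p1,p2,q1,q2. ring. Qed.

Lemma Nre0 s x v : Nre s x 0 v = s*(v^2*(1+s-x)-(1-2*x)*s*x).
Proof. unfold Nre,p1,p2,q1,q2. ring. Qed.

Lemma N0norm s x v : (Nre s x 0 v)^2 + (Nim s x 0 v)^2 = (s^2*((1-2*x)^2+v^2)) * (s^2*((1-2*x)^2+v^2) + F0 s x v).
Proof. unfold Nre,Nim,p1,p2,q1,q2,F0. ring. Qed.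

Section S2.
Variables s x : R.
Hypothesis Hs : 0 < s.
Hypothesis Hx0 : 0 < x.
Hypothesis Hx1 : x < 1/3.

Lemma T1 u : 0 <= u -> 0 <= s*u*(2*u^2 - (1-5*x)*u + (1-4*x+5*x^2)).
Proof.
  intros Hu. apply Rmult_le_pos. apply Rmult_le_pos; lra.
  assert (0 <= 2*(u-(1-5*x)/4)^2) by (apply Rmult_le_pos; [lra| apply pow2_ge_0]).
  nra.
Qed.

Lemma T2 u : 0 <= u -> 0 <= u^4 + 2*u^3*x - x*(1-3*x)*u^2 + x*(1-2*x)*(1-3*x)*u + x^2*(1-2*x)^2.
Proof.
  intros Hu.
  assert (H1: x*(1-3*x)*u <= 2*x*u^2 + x*(1-3*x)^2/8).
  { assert (0 <= 2*x*(u - (1-3*x)/4)^2) by (apply Rmult_le_pos; [lra | apply pow2_ge_0]). nra. }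
  assert (H2: 0 <= u*(u^3 + x*(1-2*x)*(1-3*x) - x*(1-3*x)^2/8)).
  { apply Rmult_le_pos; auto. assert (0 <= u^3) by (apply pow_le; lra).
    assert (0 <= x*(1-3*x)*((1-2*x) - (1-3*x)/8)) by (apply Rmult_le_pos; [apply Rmult_le_pos|]; lra).
    nra. }
  assert (0 <= u * (2*x*u^2 + x*(1-3*x)^2/8 - x*(1-3*x)*u)) by (apply Rmult_le_pos; lra).
  nra.
Qed.

Lemma T3 u v : 0 <= u -> 0 <= v^2*(3*u^2 - 2*(1-3*x)*u + 9*x^2-8*x+2).
Proof. intros. apply Rmult_le_pos. nra. nra. Qed.

Lemma H_ge u v : 0 <= u -> 0 <= v ->
  Hx s x u v - ((q1 s x u v)^2 + (q2 s x u v)^2 - ((p1 s x u v)^2 + (p2 s x u v)^2)) >= 0.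
Proof.
  intros Hu Hv.
  assert (E: Hx s x u v - ((q1 s x u v)^2 + (q2 s x u v)^2 - ((p1 s x u v)^2 + (p2 s x u v)^2)) =
    s*u*(2*u^2 - (1-5*x)*u + (1-4*x+5*x^2)) +
    (u^4 + 2*u^3*x - x*(1-3*x)*u^2 + x*(1-2*x)*(1-3*x)*u + x^2*(1-2*x)^2) +
    v^2*(3*u^2 - 2*(1-3*x)*u + 9*x^2-8*x+2) + 2*u*v^2*s + s^2*(1-x)*u + 2*v^4).
  { unfold Hx,p1,p2,q1,q2. ring. }
  rewrite E.
  pose proof (T1 u Hu). pose proof (T2 u Hu). pose proof (T3 u v Hu).
  assert (0 <= 2*u*v^2*s) by (repeat apply Rmult_le_pos; nra).
  assert (0 <= s^2*(1-x)*u) by (repeat apply Rmult_le_pos; nra).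
  assert (0 <= 2*v^4) by nra.
  lra.
Qed.

End S2.

Lemma qq_neg s x w v : 0 < s -> 0 < x < 1/3 -> 0 < w -> w^2 < s*(1-2*x) -> 0 <= v <= w -> qq s x w v < 0.
Proof.
  intros Hs Hxr Hw Hw2 Hv. unfold qq.
  set (K := s^2+s*(1-x)+x*(1-2*x)).
  assert (HK: 0 < K) by (unfold K; nra).
  assert (h1: - w*(1-x)*K*v <= - v^2*(1-x)*K).
  { assert (0 <= v*(w-v)*((1-x)*K)) by (apply Rmult_le_pos; [apply Rmult_le_pos|apply Rmult_le_pos]; lra). nra. }
  assert (h2: (s*x*(1-2*x) - w^2*(s+1-x))*v^2 <= s*x*(1-2*x)*v^2).
  { assert (0 <= w^2*(s+1-x)*v^2) by (apply Rmult_le_pos; [apply Rmult_le_pos|]; nra). nra. }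
  assert (h3: s*x*(1-2*x) - (1-x)*K <= 0).
  { unfold K. assert (x*(1-2*x) <= (1-x)^2) by nra. nra. }
  assert (h4: s*x*(1-2*x)*(w^2-s*(1-x)-x*(1-2*x)) < 0).
  { assert (0 < s*x*(1-2*x)) by (apply Rmult_lt_0_compat; [apply Rmult_lt_0_compat|]; lra).
    assert (w^2-s*(1-x)-x*(1-2*x) < 0) by nra. nra. }
  assert (v^2*(s*x*(1-2*x) - (1-x)*K) <= 0).
  { assert (0 <= v^2) by nra. nra. }
  nra.
Qed.

Lemma key s x w u v : 0 < s -> 0 < x < 1/3 -> 0 < w -> w^2 < s*(1-2*x) -> 0 <= u -> 0 < v <= w ->
  (p1 s x u v)^2 + (p2 s x u v)^2 <= (q1 s x u v)^2 + (q2 s x u v)^2 ->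
  0 <= Nim s x u v ->
  0 <= cross (Nre s x 0 w) (Nim s x 0 w) (Nre s x u v) (Nim s x u v).
Proof.
  intros Hs Hxr Hw Hw2 Hu Hv Hreg Hc.
  assert (Id: Nim s x 0 v * cross (Nre s x 0 w) (Nim s x 0 w) (Nre s x u v) (Nim s x u v) =
     cross (Nre s x 0 w) (Nim s x 0 w) (Nre s x 0 v) (Nim s x 0 v) * Nim s x u v +
     cross (Nre s x 0 v) (Nim s x 0 v) (Nre s x u v) (Nim s x u v) * Nim s x 0 w).
  { unfold cross. ring. }
  assert (Hby: 0 < Nim s x 0 v).
  { rewrite Nim0. assert (0 < s*v) by (apply Rmult_lt_0_compat; lra).
    apply Rmult_lt_0_compat; auto. nra. }
  assert (Hay: 0 < Nim s x 0 w).
  { rewrite Nim0. assert (0 < s*w) by (apply Rmult_lt_0_compat; lra).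
    apply Rmult_lt_0_compat; auto. nra. }
  assert (Hab: 0 <= cross (Nre s x 0 w) (Nim s x 0 w) (Nre s x 0 v) (Nim s x 0 v)).
  { rewrite cross_ab. pose proof (qq_neg s x w v Hs Hxr Hw Hw2 ltac:(lra)).
    assert (0 <= s^2) by nra.
    assert (0 <= (v-w)*qq s x w v) by nra. nra. }
  assert (Hbc: 0 <= cross (Nre s x 0 v) (Nim s x 0 v) (Nre s x u v) (Nim s x u v)).
  { rewrite cross_bc. pose proof (H_ge s x Hs (proj1 Hxr) (proj2 Hxr) u v Hu ltac:(lra)).
    assert (0 <= Hx s x u v) by lra.
    assert (0 <= s^2*u*v) by (apply Rmult_le_pos; [apply Rmult_le_pos|]; nra).
    nra. }
  assert (0 <= Nim s x 0 v * cross (Nre s x 0 w) (Nim s x 0 w) (Nre s x u v) (Nim s x u v)).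
  { rewrite Id. assert (0 <= cross (Nre s x 0 w) (Nim s x 0 w) (Nre s x 0 v) (Nim s x 0 v) * Nim s x u v) by (apply Rmult_le_pos; lra).
    assert (0 <= cross (Nre s x 0 v) (Nim s x 0 v) (Nre s x u v) (Nim s x u v) * Nim s x 0 w) by (apply Rmult_le_pos; lra).
    lra. }
  nra.
Qed.

Definition Rq1 s x u v e C S := p1 s x u v + e*(q1 s x u v*C + q2 s x u v*S).
Definition Rq2 s x u v e C S := p2 s x u v + e*(q2 s x u v*C - q1 s x u v*S).

Lemma mod_eq s x u v e C S : Rq1 s x u v e C S = 0 -> Rq2 s x u v e C S = 0 -> C^2+S^2 = 1 ->
  (p1 s x u v)^2 + (p2 s x u v)^2 = e^2*((q1 s x u v)^2 + (q2 s x u v)^2).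
Proof.
  unfold Rq1,Rq2. intros H1 H2 H3.
  assert (E1: p1 s x u v = - e*(q1 s x u v*C + q2 s x u v*S)) by lra.
  assert (E2: p2 s x u v = - e*(q2 s x u v*C - q1 s x u v*S)) by lra.
  rewrite E1, E2.
  replace (e^2*((q1 s x u v)^2 + (q2 s x u v)^2)) with (e^2*((q1 s x u v)^2 + (q2 s x u v)^2)*(C^2+S^2)) by (rewrite H3; ring).
  ring.
Qed.

Lemma N_form s x u v e C S : Rq1 s x u v e C S = 0 -> Rq2 s x u v e C S = 0 ->
  Nre s x u v = e*((q1 s x u v)^2 + (q2 s x u v)^2)*C /\
  Nim s x u v = e*((q1 s x u v)^2 + (q2 s x u v)^2)*S.
Proof.
  unfold Rq1,Rq2,Nre,Nim. intros H1 H2.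
  assert (E1: p1 s x u v = - e*(q1 s x u v*C + q2 s x u v*S)) by lra.
  assert (E2: p2 s x u v = - e*(q2 s x u v*C - q1 s x u v*S)) by lra.
  rewrite E1, E2. split; ring.
Qed.

Lemma real_root s x u e : 0 < s -> 0 < x < 1 -> 0 <= u -> 0 < e <= 1 ->
  Rq1 s x u 0 e 1 0 <> 0.
Proof.
  intros Hs Hx Hu He. unfold Rq1,p1,q1,q2.
  destruct (Rle_dec u (1-2*x)).
  - assert (0 <= e*(s*(1-2*x-u))) by (apply Rmult_le_pos; nra).
    assert (0 < s*x) by nra. assert (0 <= u^2 + (s+x)*u) by nra. nra.
  - assert (e*(s*(u-(1-2*x))) <= s*(u-(1-2*x))).
    { assert (0 <= (1-e)*(s*(u-(1-2*x)))) by (apply Rmult_le_pos; nra). nra. }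
    assert (0 < s*x) by nra. nra.
Qed.

Lemma F0_mono s x v w : 0 <= x -> 0 <= v -> 0 < w -> F0 s x v <= F0 s x w -> v <= w.
Proof.
  unfold F0. intros Hx Hv Hw H. destruct (Rle_dec v w); auto.
  exfalso. assert (w < v) by lra.
  assert (w^2 < v^2) by nra. assert (w^4 < v^4) by nra.
  assert (x^2*w^2 <= x^2*v^2) by (apply Rmult_le_compat_l; nra). nra.
Qed.

Lemma region_F0 s x u v : 0 < s -> 0 <= x < 1 -> 0 <= u ->
  F0 s x v <= (p1 s x u v)^2 + (p2 s x u v)^2 - ((q1 s x u v)^2 + (q2 s x u v)^2).
Proof.
  intros Hs Hx Hu. rewrite PQ_diff.
  assert (0 <= u^4 + 2*u^3*s + 2*u^3*x + 2*u^2*v^2 + 4*u^2*s*x + u^2*x^2 + 2*u*v^2*s + 2*u*v^2*x + 2*u*s^2*(1-x) + 2*u*s*x^2).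
  { assert (0 <= u^2) by nra. assert (0<= u^3) by (apply pow_le; lra). assert (0 <= u^4) by (apply pow_le; lra).
    assert (0 <= v^2) by nra. assert (0 <= u^2*v^2) by nra. assert (0 <= u*v^2) by nra.
    assert (0 <= u*s^2*(1-x)) by (apply Rmult_le_pos; nra).
    assert (0 <= u^2*s*x) by (apply Rmult_le_pos; nra).
    assert (0 <= u*s*x^2) by (apply Rmult_le_pos; nra).
    assert (0 <= u^3*s) by nra. assert (0 <= u^3*x) by nra. assert (0 <= u^2*x^2) by nra.
    assert (0 <= u*v^2*s) by nra. assert (0 <= u*v^2*x) by nra. nra. }
  lra.
Qed.

Lemma core_pos s x w th t u v :
  0 < s -> 0 < x < 1/3 -> 0 < w -> w^2 < s*(1-2*x) -> F0 s x w = 0 ->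
  0 <= t -> t*w < th -> 0 < th < PI ->
  Nre s x 0 w = (s^2*((1-2*x)^2+w^2)) * cos th ->
  Nim s x 0 w = (s^2*((1-2*x)^2+w^2)) * sin th ->
  0 <= v -> 0 <= u ->
  Rq1 s x u v (exp (-(t*u))) (cos (t*v)) (sin (t*v)) = 0 ->
  Rq2 s x u v (exp (-(t*u))) (cos (t*v)) (sin (t*v)) = 0 -> False.
Proof.
  intros Hs Hx Hw Hw2 HF Ht Htw Hth Hc Hsn Hv Hu HR1 HR2.
  set (e := exp (-(t*u))) in *.
  assert (He: 0 < e <= 1).
  { unfold e. split. apply exp_pos. rewrite <- exp_0. 
    destruct (Req_dec (t*u) 0) as [E|E]. rewrite E, Ropp_0. lra.
    left. apply exp_increasing. assert (0 <= t*u) by nra. lra. }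
  destruct (Req_dec v 0) as [Hv0|Hv0].
  { subst v. rewrite Rmult_0_r, cos_0, sin_0 in HR1. 
    apply (real_root s x u e Hs ltac:(lra) Hu He HR1). }
  assert (Hvp: 0 < v) by lra.
  pose proof (sin2_cos2 (t*v)) as Hsc. unfold Rsqr in Hsc.
  assert (Hcs: (cos (t*v))^2 + (sin (t*v))^2 = 1) by (rewrite <- Hsc; ring).
  pose proof (mod_eq _ _ _ _ _ _ _ HR1 HR2 Hcs) as Hmod.
  set (Q2 := (q1 s x u v)^2 + (q2 s x u v)^2) in *.
  assert (HQ: 0 < Q2).
  { unfold Q2, q2. assert (0 < s*v) by nra. assert (0 < (-s*v)^2) by nra. assert (0 <= (q1 s x u v)^2) by nra. lra. }
  assert (Hreg: (p1 s x u v)^2 + (p2 s x u v)^2 <= Q2).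
  { rewrite Hmod. assert (e^2 <= 1) by nra. nra. }
  assert (Hvw: v <= w).
  { apply (F0_mono s x v w); try lra.
    pose proof (region_F0 s x u v Hs ltac:(lra) Hu). fold Q2 in H. lra. }
  assert (Htv: 0 <= t*v <= t*w) by (split; nra).
  assert (HS: 0 <= sin (t*v)) by (apply sin_ge_0; lra).
  destruct (N_form _ _ _ _ _ _ _ HR1 HR2) as [HN1 HN2]. fold Q2 in HN1, HN2.
  assert (HNim: 0 <= Nim s x u v) by (rewrite HN2; apply Rmult_le_pos; [apply Rmult_le_pos|]; lra).
  pose proof (key s x w u v Hs Hx Hw Hw2 Hu ltac:(lra) Hreg HNim) as Hk.
  unfold cross in Hk. rewrite HN1, HN2, Hc, Hsn in Hk.
  set (K0 := s^2*((1-2*x)^2+w^2)) in *.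
  assert (HK0: 0 < K0) by (unfold K0; apply Rmult_lt_0_compat; nra).
  assert (Hsin: sin (t*v - th) < 0) by (apply sin_lt_0_var; lra).
  rewrite sin_minus in Hsin.
  assert (0 < e*Q2*K0) by (apply Rmult_lt_0_compat; [apply Rmult_lt_0_compat|]; lra).
  assert (K0 * cos th * (e * Q2 * sin (t * v)) - K0 * sin th * (e * Q2 * cos (t * v)) =
          (e*Q2*K0) * (sin (t*v) * cos th - cos (t*v) * sin th)) by ring.
  nra.
Qed.

Lemma R1_neg s x u v e C S : Rq1 s x u (-v) e C (-S) = Rq1 s x u v e C S.
Proof. unfold Rq1,p1,q1,q2. ring. Qed.
Lemma R2_neg s x u v e C S : Rq2 s x u (-v) e C (-S) = - Rq2 s x u v e C S.
Proof. unfold Rq2,p2,q1,q2. ring. Qed.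

Lemma core s x w th t u v :
  0 < s -> 0 < x < 1/3 -> 0 < w -> w^2 < s*(1-2*x) -> F0 s x w = 0 ->
  0 <= t -> t*w < th -> 0 < th < PI ->
  Nre s x 0 w = (s^2*((1-2*x)^2+w^2)) * cos th ->
  Nim s x 0 w = (s^2*((1-2*x)^2+w^2)) * sin th ->
  Rq1 s x u v (exp (-(t*u))) (cos (t*v)) (sin (t*v)) = 0 ->
  Rq2 s x u v (exp (-(t*u))) (cos (t*v)) (sin (t*v)) = 0 -> u < 0.
Proof.
  intros Hs Hx Hw Hw2 HF Ht Htw Hth Hc Hsn HR1 HR2.
  destruct (Rlt_le_dec u 0) as [Hu|Hu]; auto. exfalso.
  destruct (Rle_dec 0 v) as [Hv|Hv].
  - exact (core_pos s x w th t u v Hs Hx Hw Hw2 HF Ht Htw Hth Hc Hsn Hv Hu HR1 HR2).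
  - apply (core_pos s x w th t u (-v) Hs Hx Hw Hw2 HF Ht Htw Hth Hc Hsn ltac:(lra) Hu).
    + replace (t*(-v)) with (-(t*v)) by ring. rewrite cos_neg, sin_neg, R1_neg. exact HR1.
    + replace (t*(-v)) with (-(t*v)) by ring. rewrite cos_neg, sin_neg, R2_neg, HR2. ring.
Qed.

Lemma core_big s x t u v :
  0 < s -> 1/3 <= x < 1 -> 0 <= t ->
  Rq1 s x u v (exp (-(t*u))) (cos (t*v)) (sin (t*v)) = 0 ->
  Rq2 s x u v (exp (-(t*u))) (cos (t*v)) (sin (t*v)) = 0 -> u < 0.
Proof.
  intros Hs Hx Ht HR1 HR2.
  destruct (Rlt_le_dec u 0) as [Hu|Hu]; auto. exfalso.
  set (e := exp (-(t*u))) in *.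
  assert (He: 0 < e <= 1).
  { unfold e. split. apply exp_pos. rewrite <- exp_0. 
    destruct (Req_dec (t*u) 0) as [E|E]. rewrite E, Ropp_0. lra.
    left. apply exp_increasing. assert (0 <= t*u) by nra. lra. }
  destruct (Req_dec v 0) as [Hv0|Hv0].
  { subst v. rewrite Rmult_0_r, cos_0, sin_0 in HR1. 
    apply (real_root s x u e Hs ltac:(lra) Hu He HR1). }
  pose proof (sin2_cos2 (t*v)) as Hsc. unfold Rsqr in Hsc.
  assert (Hcs: (cos (t*v))^2 + (sin (t*v))^2 = 1) by (rewrite <- Hsc; ring).
  pose proof (mod_eq _ _ _ _ _ _ _ HR1 HR2 Hcs) as Hmod.
  pose proof (region_F0 s x u v Hs ltac:(lra) Hu) as Hr.
  assert (HF: 0 < F0 s x v).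
  { unfold F0. assert (0 < v^2) by (apply pow2_gt_0 || nra; auto).
    assert (0 < v^4) by nra. assert (0 <= x^2*v^2) by nra.
    assert (0 <= s^2*(3*x-1)*(1-x)) by (apply Rmult_le_pos; [apply Rmult_le_pos|]; nra). lra. }
  assert (e^2 <= 1) by nra.
  assert (0 <= (q1 s x u v)^2 + (q2 s x u v)^2) by nra.
  nra.
Qed.

Definition K0 s x w := s^2*((1-2*x)^2+w^2).
Definition om s x := sqrt (/ 2 * (- x ^ 2 + sqrt (x ^ 4 + s ^ 2 * (12 * x ^ 2 - 16 * x + 4)))).
Definition hh s x w := (w ^ 2 * (1 + s - x) - (1 - 2 * x) * s * x) / (s * ((1 - 2 * x) ^ 2 + w ^ 2)).

Lemma imag_lin s x w C S : Rq1 s x 0 w 1 C S = 0 -> Rq2 s x 0 w 1 C S = 0 ->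
  K0 s x w * C = Nre s x 0 w /\ K0 s x w * S = Nim s x 0 w.
Proof.
  intros H1 H2.
  assert (E1: K0 s x w * C - Nre s x 0 w = s*(1-2*x) * Rq1 s x 0 w 1 C S - s*w*Rq2 s x 0 w 1 C S)
    by (unfold K0,Nre,Rq1,Rq2,p1,p2,q1,q2; ring).
  assert (E2: K0 s x w * S - Nim s x 0 w = -(s*w) * Rq1 s x 0 w 1 C S - s*(1-2*x)*Rq2 s x 0 w 1 C S)
    by (unfold K0,Nim,Rq1,Rq2,p1,p2,q1,q2; ring).
  rewrite H1, H2 in E1, E2. split; lra.
Qed.

Lemma imag_lin_conv s x w C S : 0 < K0 s x w ->
  K0 s x w * C = Nre s x 0 w -> K0 s x w * S = Nim s x 0 w ->
  Rq1 s x 0 w 1 C S = 0 /\ Rq2 s x 0 w 1 C S = 0.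
Proof.
  intros HK H1 H2.
  assert (E1: K0 s x w * Rq1 s x 0 w 1 C S = s*(1-2*x)*(K0 s x w * C - Nre s x 0 w) - s*w*(K0 s x w * S - Nim s x 0 w))
    by (unfold K0,Nre,Nim,Rq1,Rq2,p1,p2,q1,q2; ring).
  assert (E2: K0 s x w * Rq2 s x 0 w 1 C S = -(s*w)*(K0 s x w * C - Nre s x 0 w) - s*(1-2*x)*(K0 s x w * S - Nim s x 0 w))
    by (unfold K0,Nre,Nim,Rq1,Rq2,p1,p2,q1,q2; ring).
  rewrite H1, H2, Rminus_diag, Rminus_diag in E1, E2.
  split.
  - apply (Rmult_eq_reg_l (K0 s x w)); [|lra]. rewrite E1. ring.
  - apply (Rmult_eq_reg_l (K0 s x w)); [|lra]. rewrite E2. ring.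
Qed.

Lemma om_facts s x : 0 < s -> 0 < x < 1/3 ->
  0 < om s x /\ F0 s x (om s x) = 0 /\ (om s x)^2 < s*(1-2*x).
Proof.
  intros Hs Hx.
  set (D := x ^ 4 + s ^ 2 * (12 * x ^ 2 - 16 * x + 4)).
  assert (HD4: x^4 < D).
  { unfold D. assert (0 < 12 * x ^ 2 - 16 * x + 4) by nra. assert (0 < s^2) by nra. nra. }
  assert (Hx4: 0 <= x^4) by (apply pow_le; lra).
  assert (HsD: x^2 < sqrt D).
  { replace (x^2) with (sqrt (x^4)). apply sqrt_lt_1; lra.
    replace (x^4) with ((x^2)^2) by ring. apply sqrt_pow2. nra. }
  assert (HsD2: (sqrt D)^2 = D) by (apply pow2_sqrt; lra).
  set (I := / 2 * (- x ^ 2 + sqrt D)).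
  assert (HI: 0 < I) by (unfold I; lra).
  assert (Hw: om s x = sqrt I) by reflexivity.
  assert (Hw2: (om s x)^2 = I) by (rewrite Hw; apply pow2_sqrt; lra).
  split; [|split].
  - rewrite Hw. apply sqrt_lt_R0. lra.
  - unfold F0. replace ((om s x)^4) with (((om s x)^2)^2) by ring. rewrite Hw2. unfold I.
    replace ((/ 2 * (- x ^ 2 + sqrt D)) ^ 2) with (/4 * (x^4 - 2*x^2*sqrt D + (sqrt D)^2)) by field.
    rewrite HsD2. unfold D. field.
  - rewrite Hw2. unfold I.
    assert (sqrt D < 2*s*(1-2*x) + x^2).
    { assert (0 < 2*s*(1-2*x) + x^2) by nra.
      rewrite <- (sqrt_pow2 (2*s*(1-2*x) + x^2)) by lra.
      apply sqrt_lt_1; [lra| nra |]. unfold D. assert (0 < s*x^2*(s + (1-2*x))) by (apply Rmult_lt_0_compat; [apply Rmult_lt_0_compat|]; nra). nra. }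
    lra.
Qed.

Lemma om_third s : om s (1/3) = 0.
Proof.
  unfold om. replace ((1/3) ^ 4 + s ^ 2 * (12 * (1/3) ^ 2 - 16 * (1/3) + 4)) with ((1/9)^2) by field.
  rewrite sqrt_pow2 by lra. replace (/ 2 * (- (1 / 3) ^ 2 + 1 / 9)) with 0 by field. apply sqrt_0.
Qed.

Lemma hh_third s : 0 < s -> hh s (1/3) 0 = -1.
Proof. intros. unfold hh. field. lra. Qed.

Lemma angle_facts s x : 0 < s -> 0 < x < 1/3 ->
  let w := om s x in let th := acos (hh s x w) in
  0 < th < PI /\ Nre s x 0 w = K0 s x w * cos th /\ Nim s x 0 w = K0 s x w * sin th /\
  -1 < hh s x w < 1 /\ K0 s x w * hh s x w = Nre s x 0 w.
Proof.
  intros Hs Hx w th.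
  destruct (om_facts s x Hs Hx) as [Hw [HF Hw2]]. fold w in Hw, HF, Hw2.
  assert (HK: 0 < K0 s x w) by (unfold K0; apply Rmult_lt_0_compat; nra).
  assert (Hh: K0 s x w * hh s x w = Nre s x 0 w).
  { rewrite Nre0. unfold K0, hh. field. split; nra. }
  assert (Hn: (Nre s x 0 w)^2 + (Nim s x 0 w)^2 = (K0 s x w)^2).
  { rewrite N0norm, HF. unfold K0. ring. }
  assert (Hi: 0 < Nim s x 0 w).
  { rewrite Nim0. assert (0 < s*w) by (apply Rmult_lt_0_compat; lra). apply Rmult_lt_0_compat; auto. nra. }
  assert (Hb: -1 < hh s x w < 1).
  { assert ((K0 s x w * hh s x w)^2 < (K0 s x w)^2) by (rewrite Hh; nra).
    assert ((hh s x w)^2 < 1).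
    { apply (Rmult_lt_reg_l ((K0 s x w)^2)). nra. nra. }
    nra. }
  assert (Hc: cos th = hh s x w) by (apply cos_acos; lra).
  assert (Hsn: sin th = Nim s x 0 w / K0 s x w).
  { unfold th. rewrite sin_acos by lra.
    replace (1 - (hh s x w)²) with ((Nim s x 0 w / K0 s x w)^2).
    apply sqrt_pow2. apply Rlt_le, Rdiv_lt_0_compat; lra.
    assert (Hh': hh s x w = Nre s x 0 w / K0 s x w) by (rewrite <- Hh; field; lra).
    unfold Rsqr. rewrite Hh'. field_simplify_eq; [|lra]. nra. }
  split; [|split; [|split; [|split]]]; auto.
  - apply acos_bound_lt. lra.
  - rewrite Hc. lra.
  - rewrite Hsn. field. lra.
Qed.

Lemma cR_plus (f g : R -> R) x : continuous f x -> continuous g x -> continuous (fun y => f y + g y) x.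
Proof. intros. exact (continuous_plus f g x H H0). Qed.
Lemma cR_mult (f g : R -> R) x : continuous f x -> continuous g x -> continuous (fun y => f y * g y) x.
Proof. intros. exact (continuous_mult f g x H H0). Qed.
Lemma cR_minus (f g : R -> R) x : continuous f x -> continuous g x -> continuous (fun y => f y - g y) x.
Proof. intros. exact (continuous_minus f g x H H0). Qed.
Lemma cR_opp (f : R -> R) x : continuous f x -> continuous (fun y => - f y) x.
Proof. intros. exact (continuous_opp f x H). Qed.
Lemma cR_const (c x : R) : continuous (fun _ : R => c) x.
Proof. exact (continuous_const c x). Qed.
Lemma cR_id (x : R) : continuous (fun y : R => y) x.
Proof. exact (continuous_id x). Qed.
Lemma cR_pow (f : R -> R) x n : continuous f x -> continuous (fun y => f y ^ n) x.
Proof. intros H. induction n; simpl. apply cR_const. apply cR_mult; auto. Qed.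
Lemma cR_div (f g : R -> R) x : continuous f x -> continuous g x -> g x <> 0 -> continuous (fun y => f y / g y) x.
Proof. intros. apply cR_mult; auto. apply continuous_Rinv_comp; auto. Qed.
Lemma cR_sqrt (f : R -> R) x : continuous f x -> continuous (fun y => sqrt (f y)) x.
Proof. intros. apply continuous_sqrt_comp; auto. Qed.

Lemma acos_pos_cont y : 0 < y -> continuous acos y.
Proof.
  intros Hy.
  apply (continuous_ext_loc _ (fun z => atan (sqrt (1 - z²) / z))).
  - exists (mkposreal y Hy). intros z Hz.
    unfold ball in Hz; simpl in Hz; unfold AbsRing_ball, abs, minus, plus, opp in Hz; simpl in Hz.
    apply Rabs_lt_between in Hz.
    rewrite acos_atan; auto. lra.
  - apply continuous_atan_comp. apply cR_div. apply cR_sqrt. unfold Rsqr.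
    apply cR_minus. apply cR_const. apply cR_mult; apply cR_id. apply cR_id. lra.
Qed.

Lemma acos_cont y : continuous acos y.
Proof.
  destruct (Rtotal_order y 0) as [H|[H|H]].
  - apply (continuous_ext (fun z => PI - acos (- z))).
    + intros z. rewrite acos_opp. assert (E: PI - (PI - acos z) = acos z) by ring. exact E.
    + apply cR_minus. apply cR_const.
      apply (continuous_comp (fun z => - z) acos). apply cR_opp, cR_id.
      apply acos_pos_cont. lra.
  - subst. apply continuity_pt_filterlim. apply derivable_continuous_pt.
    apply derivable_pt_acos. lra.
  - apply acos_pos_cont; auto.
Qed.

Lemma omega_plus_eq s Y t : omega_plus s Y t = om s (xplus s Y t).
Proof. reflexivity. Qed.
Lemma theta_eq s Y t : theta s Y t = acos (hh s (xplus s Y t) (om s (xplus s Y t))).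
Proof. reflexivity. Qed.

Definition fcr s Y t := t * omega_plus s Y t - theta s Y t.

Lemma xplus_cont s Y t : continuous (fun t => xplus s Y t) t.
Proof. unfold xplus. apply cR_mult. apply cR_const. apply continuous_exp_comp. apply cR_mult. apply cR_const. apply cR_id. Qed.

Lemma om_cont s Y t : continuous (fun t => om s (xplus s Y t)) t.
Proof.
  unfold om. pose proof (xplus_cont s Y t) as HX.
  apply cR_sqrt. apply cR_mult. apply cR_const. apply cR_plus. apply cR_opp. apply cR_pow; auto.
  apply cR_sqrt. apply cR_plus. apply cR_pow; auto. apply cR_mult. apply cR_const.
  apply cR_plus. apply cR_minus. apply cR_mult. apply cR_const. apply cR_pow; auto.
  apply cR_mult. apply cR_const. auto. apply cR_const.
Qed.

Lemma fcr_cont s Y t : 0 < s -> xplus s Y t < 1/2 -> continuity_pt (fcr s Y) t.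
Proof.
  intros Hs Hx. apply continuity_pt_filterlim.
  pose proof (xplus_cont s Y t) as HX. pose proof (om_cont s Y t) as HW.
  unfold fcr. apply (cR_minus (fun t => t * omega_plus s Y t) (fun t => theta s Y t)).
  apply (cR_mult (fun t => t) (fun t => omega_plus s Y t)). apply cR_id. exact HW.
  apply (continuous_comp (fun t => hh s (xplus s Y t) (om s (xplus s Y t))) acos).
  - unfold hh. apply cR_div.
    + apply cR_minus. apply cR_mult. apply cR_pow; auto. apply cR_minus. apply cR_plus; apply cR_const. auto.
      apply cR_mult. apply cR_mult. apply cR_minus. apply cR_const. apply cR_mult. apply cR_const. auto.
      apply cR_const. auto.
    + apply cR_mult. apply cR_const. apply cR_plus. apply cR_pow. apply cR_minus. apply cR_const.
      apply cR_mult. apply cR_const. auto. apply cR_pow; auto.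
    + assert (0 < (1 - 2 * xplus s Y t)^2) by (apply pow_lt; lra).
      assert (0 <= (om s (xplus s Y t))^2) by (apply pow2_ge_0).
      apply Rgt_not_eq. apply Rmult_lt_0_compat; lra.
  - apply acos_cont.
Qed.

Lemma cont_sign g m : continuity_pt g m -> g m <> 0 ->
  exists d, 0 < d /\ forall z, Rabs (z - m) < d -> g z * g m > 0.
Proof.
  intros Hc Hne.
  assert (He: 0 < Rabs (g m)) by (apply Rabs_pos_lt; auto).
  destruct (Hc (Rabs (g m)) He) as [d [Hd H]].
  exists d. split; auto. intros z Hz.
  destruct (Req_dec z m) as [E|E].
  - rewrite E. assert (0 < g m * g m) by (apply Rsqr_pos_lt; auto). lra.
  - assert (Hd': R_dist (g z) (g m) < Rabs (g m)).
    { apply H. split. split. exact I. intro HH; apply E; symmetry; exact HH. unfold R_dist; exact Hz. }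
    unfold R_dist in Hd'.
    destruct (Rlt_dec (g m) 0).
    + rewrite (Rabs_left (g m)) in Hd' by lra. apply Rabs_def2 in Hd'. destruct Hd'. nra.
    + rewrite (Rabs_right (g m)) in Hd' by lra. apply Rabs_def2 in Hd'. destruct Hd'. assert (0 < g m) by lra. nra.
Qed.

Lemma first_zero (g : R -> R) a b :
  a < b -> (forall t, a <= t <= b -> continuity_pt g t) -> g a < 0 -> g b < 0 ->
  (exists z, a < z < b /\ g z = 0) ->
  exists ta, a < ta < b /\ g ta = 0 /\ (forall t, a <= t < ta -> g t < 0).
Proof.
  intros Hab Hc Ha Hb [z0 [Hz0 Hgz0]].
  set (S := fun y => a <= y <= b /\ forall z, a <= z <= y -> g z < 0).
  assert (HSb: bound S) by (exists b; intros y [Hy _]; lra).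
  assert (Sa: S a).
  { split. lra. intros z Hz. replace z with a by lra. auto. }
  assert (HSa: exists y, S y) by (exists a; exact Sa).
  destruct (completeness S HSb HSa) as [m [Hub Hlub]].
  assert (Ham: a <= m) by (apply Hub; exact Sa).
  assert (Hmb: m <= b) by (apply Hlub; intros y [Hy _]; lra).
  assert (Hlt: forall t, a <= t < m -> g t < 0).
  { intros t Ht. destruct (classic (exists y, S y /\ t < y)) as [[y [[Hy1 Hy2] Hty]]|Hn].
    - apply Hy2. lra.
    - exfalso. assert (m <= t). { apply Hlub. intros y Hy. destruct (Rle_dec y t); auto.
        exfalso. apply Hn. exists y. split; auto. lra. }
      lra. }
  assert (Hgm: g m = 0).
  { destruct (Req_dec (g m) 0) as [E|E]; auto. exfalso.
    destruct (cont_sign g m (Hc m ltac:(lra)) E) as [d [Hd Hdz]].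
    destruct (Rlt_dec (g m) 0) as [Hneg|Hpos].
    - set (y := Rmin (m + d/2) b).
      assert (Sy: S y).
      { split. unfold y. split; [apply Rmin_glb; lra | apply Rmin_r].
        intros z Hz. destruct (Rlt_dec z m). apply Hlt; lra.
        assert (Rabs (z - m) < d).
        { assert (z <= m + d/2) by (pose proof (Rmin_l (m+d/2) b); unfold y in Hz; lra).
          apply Rabs_def1; lra. }
        pose proof (Hdz z H). nra. }
      pose proof (Hub y Sy).
      destruct (Rle_dec (m + d/2) b) as [Hle|Hle].
      + unfold y in H. rewrite Rmin_left in H by lra. lra.
      + unfold y in H. rewrite Rmin_right in H by lra.
        assert (g z0 < 0).
        { destruct (Rlt_dec z0 m). apply Hlt; lra. assert (z0 = m) by lra. subst. lra. }
        lra.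
    - assert (Hp: 0 < g m) by lra.
      assert (a < m) by (destruct (Req_dec a m); [subst; lra | lra]).
      set (z := Rmax a (m - d/2)).
      assert (Hz1: a <= z < m) by (unfold z; split; [apply Rmax_l | apply Rmax_lub_lt; lra]).
      assert (Rabs (z - m) < d).
      { assert (m - d/2 <= z) by (unfold z; apply Rmax_r). apply Rabs_def1; lra. }
      pose proof (Hdz z H0). pose proof (Hlt z Hz1). nra. }
  exists m. split; [|split]; auto.
  split.
  - destruct (Req_dec a m); [subst; lra| lra].
  - destruct (Req_dec m b); [subst; lra| lra].
Qed.

Lemma last_zero (g : R -> R) a b :
  a < b -> (forall t, a <= t <= b -> continuity_pt g t) -> g a < 0 -> g b < 0 ->
  (exists z, a < z < b /\ g z = 0) ->
  exists tb, a < tb < b /\ g tb = 0 /\ (forall t, tb < t <= b -> g t < 0).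
Proof.
  intros Hab Hc Ha Hb [z0 [Hz0 Hgz0]].
  destruct (first_zero (fun t => g (- t)) (-b) (-a)) as [m [Hm [Hgm Hlt]]].
  - lra.
  - intros t Ht. apply (continuity_pt_comp Ropp g t).
    apply continuity_pt_opp. apply derivable_continuous_pt, derivable_pt_id. apply Hc. lra.
  - rewrite Ropp_involutive; auto.
  - rewrite Ropp_involutive; auto.
  - exists (-z0). split. lra. rewrite Ropp_involutive; auto.
  - exists (-m). split; [lra|split; auto].
    intros t Ht. replace t with (- - t) by ring. apply Hlt. lra.
Qed.

Section X.
Variables s Y : R.
Hypothesis Hs : 0 < s.
Hypothesis HY : 3*s < Y.

Lemma xplus_pos t : 0 < xplus s Y t.
Proof. unfold xplus. apply Rmult_lt_0_compat. apply Rdiv_lt_0_compat; lra. apply exp_pos. Qed.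

Lemma xplus_incr t1 t2 : t1 < t2 -> xplus s Y t1 < xplus s Y t2.
Proof. intros. unfold xplus. apply Rmult_lt_compat_l. apply Rdiv_lt_0_compat; lra.
  apply exp_increasing. nra. Qed.

Lemma xplus_le t1 t2 : t1 <= t2 -> xplus s Y t1 <= xplus s Y t2.
Proof. intros [H|H]. left; apply xplus_incr; auto. subst; lra. Qed.

Lemma xplus_0 : xplus s Y 0 = s/Y.
Proof. unfold xplus. rewrite Rmult_0_r, exp_0. ring. Qed.

Lemma xplus_star : xplus s Y (tau_star s Y) = 1/3.
Proof. unfold xplus, tau_star. replace (s * (/ s * ln (Y / (3 * s)))) with (ln (Y / (3*s))) by (field; lra).
  rewrite exp_ln. field. split; lra. apply Rdiv_lt_0_compat; lra. Qed.

Lemma xplus_c : xplus s Y (tau_c s Y) = 1.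
Proof. unfold xplus, tau_c. replace (s * (/ s * ln (Y / s))) with (ln (Y / s)) by (field; lra).
  rewrite exp_ln. field. split; lra. apply Rdiv_lt_0_compat; lra. Qed.

Lemma tau_star_pos : 0 < tau_star s Y.
Proof. unfold tau_star. apply Rmult_lt_0_compat. apply Rinv_0_lt_compat; lra.
  rewrite <- ln_1. apply ln_increasing. lra. apply (Rmult_lt_reg_r (3*s)). lra.
  field_simplify; lra. Qed.

Lemma x0_small : 0 < xplus s Y 0 < 1/3.
Proof. rewrite xplus_0. split. apply Rdiv_lt_0_compat; lra.
  apply (Rmult_lt_reg_r Y). lra. field_simplify; lra. Qed.

Lemma x_lt_third t : t < tau_star s Y -> xplus s Y t < 1/3.
Proof. intros. rewrite <- xplus_star. apply xplus_incr; auto. Qed.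

Lemma x_ge_third t : tau_star s Y <= t -> 1/3 <= xplus s Y t.
Proof. intros. rewrite <- xplus_star. apply xplus_le; auto. Qed.

Lemma x_lt_one t : t < tau_c s Y -> xplus s Y t < 1.
Proof. intros. rewrite <- xplus_c. apply xplus_incr; auto. Qed.

Lemma third_lt_t t : 0 <= t -> xplus s Y t < 1/3 -> t < tau_star s Y.
Proof. intros H0 H. destruct (Rlt_le_dec t (tau_star s Y)); auto.
  pose proof (x_ge_third t r). lra. Qed.
End X.

Lemma charC_eq s Y t u v :
  charC s Y t (u,v) = (Rq1 s (xplus s Y t) u v (exp (-(t*u))) (cos (t*v)) (sin (t*v)),
                       Rq2 s (xplus s Y t) u v (exp (-(t*u))) (cos (t*v)) (sin (t*v))).
Proof.
  unfold charC, cexp, Rq1, Rq2, p1, p2, q1, q2, xplus, Cplus, Cmult, RtoC. simpl.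
  replace (- t * u - 0 * v) with (-(t*u)) by ring.
  replace (- t * v + 0 * u) with (-(t*v)) by ring.
  rewrite cos_neg, sin_neg.
  apply injective_projections; simpl; unfold Rdiv; ring.
Qed.

Section Main.
Variables s Y : R.
Hypothesis Hs : 0 < s.
Hypothesis HY : 3*s < Y.

Lemma fcr_0 : fcr s Y 0 < 0.
Proof.
  unfold fcr. rewrite theta_eq.
  destruct (angle_facts s (xplus s Y 0) Hs (x0_small s Y Hs HY)) as [[Hth _] _]. lra.
Qed.

Lemma fcr_star : fcr s Y (tau_star s Y) = - PI.
Proof.
  unfold fcr. rewrite theta_eq, omega_plus_eq, xplus_star, om_third, hh_third by lra.
  replace (-1) with (-(1)) by ring. rewrite acos_opp, acos_1. ring.
Qed.

Lemma fcr_contI t : 0 <= t <= tau_star s Y -> continuity_pt (fcr s Y) t.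
Proof.
  intros Ht. apply fcr_cont; auto.
  assert (xplus s Y t <= 1/3) by (rewrite <- (xplus_star s Y Hs HY); apply xplus_le; lra). lra.
Qed.

Lemma g_contI (c : R) t : 0 <= t <= tau_star s Y -> continuity_pt (fun t => fcr s Y t - c) t.
Proof. intros Ht. apply continuity_pt_minus. apply fcr_contI; auto. apply continuity_pt_const. intros a b; auto. Qed.

Lemma theta_in t : 0 < t < tau_star s Y -> 0 < theta s Y t < PI.
Proof.
  intros Ht. rewrite theta_eq.
  assert (Hx: 0 < xplus s Y t < 1/3) by (split; [apply xplus_pos; lra | apply x_lt_third; lra]).
  destruct (angle_facts s _ Hs Hx) as [H _]. exact H.
Qed.

Lemma crossing_iff n t : crossing s Y n t <-> (0 < t < tau_star s Y /\ fcr s Y t - 2*INR n*PI = 0).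
Proof. unfold crossing, fcr. split; intros [H1 H2]; split; auto; lra. Qed.


Lemma omega_star : omega_plus s Y (tau_star s Y) = 0.
Proof. rewrite omega_plus_eq, xplus_star, om_third by lra. reflexivity. Qed.

Lemma two_crossings (n N : nat) (M t0 : R) :
  0 <= t0 <= tau_star s Y -> M = t0 * omega_plus s Y t0 ->
  (2 * INR N + 1) * PI <= M -> (n <= N)%nat ->
  exists t1 t2, t1 < t2 /\ crossing s Y n t1 /\ crossing s Y n t2.
Proof.
  intros Ht0 HM HMN Hn.
  pose proof PI_RGT_0 as Hpi. pose proof (pos_INR N) as HN. pose proof (pos_INR n) as Hn0.
  pose proof (le_INR _ _ Hn) as HnN.
  assert (HMp: 0 < M) by nra.
  assert (Ht0': 0 < t0 < tau_star s Y).
  { split.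
    - destruct (Req_dec t0 0) as [E|E]; [rewrite E in HM; lra| lra].
    - destruct (Req_dec t0 (tau_star s Y)) as [E|E]; [rewrite E, omega_star in HM; lra| lra]. }
  pose proof (theta_in t0 Ht0') as Hth.
  set (g := fun t => fcr s Y t - 2*INR n*PI).
  assert (Hg0: g 0 < 0) by (unfold g; pose proof fcr_0; nra).
  assert (Hgs: g (tau_star s Y) < 0) by (unfold g; rewrite fcr_star; nra).
  assert (Hgt0: 0 < g t0) by (unfold g, fcr; rewrite <- HM; nra).
  assert (Hc: forall t, 0 <= t <= tau_star s Y -> continuity_pt g t) by (intros; apply g_contI; auto).
  destruct (Ranalysis5.IVT_interv g 0 t0) as [z1 [Hz1 Hgz1]].
  { intros a Ha. apply Hc. lra. } lra. auto. auto.
  destruct (Ranalysis5.IVT_interv (fun t => - g t) t0 (tau_star s Y)) as [z2 [Hz2 Hgz2]].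
  { intros a Ha. apply continuity_pt_opp. apply Hc. lra. } lra. lra. lra.
  assert (z1 <> 0) by (intro E; rewrite E in Hgz1; lra).
  assert (z1 <> t0) by (intro E; rewrite E in Hgz1; lra).
  assert (z2 <> t0) by (intro E; rewrite E in Hgz2; lra).
  assert (z2 <> tau_star s Y) by (intro E; rewrite E in Hgz2; lra).
  exists z1, z2. split. lra. split; apply crossing_iff; split; try lra.
  - unfold g in Hgz1. exact Hgz1.
  - unfold g in Hgz2. lra.
Qed.

Lemma no_crossing (n N : nat) (M : R) :
  (forall t, 0 <= t <= tau_star s Y -> t * omega_plus s Y t <= M) ->
  M <= 2 * (INR N + 1) * PI -> (N + 1 <= n)%nat -> forall t, ~ crossing s Y n t.
Proof.
  intros Hmax HM Hn t Hc. unfold crossing in Hc. destruct Hc as [Ht Heq].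
  pose proof (theta_in t Ht). pose proof (Hmax t ltac:(lra)).
  apply le_INR in Hn. rewrite plus_INR in Hn. simpl in Hn. pose proof PI_RGT_0. nra.
Qed.

Lemma extremes :
  (exists z, 0 < z < tau_star s Y /\ fcr s Y z = 0) ->
  exists ta tb, 0 < ta < tau_star s Y /\ 0 < tb < tau_star s Y /\ fcr s Y ta = 0 /\ fcr s Y tb = 0 /\
    (forall t, 0 <= t < ta -> fcr s Y t < 0) /\ (forall t, tb < t <= tau_star s Y -> fcr s Y t < 0).
Proof.
  intros Hz. pose proof (tau_star_pos s Y Hs HY) as Hts.
  assert (Hc: forall t, 0 <= t <= tau_star s Y -> continuity_pt (fcr s Y) t) by (intros; apply fcr_contI; auto).
  pose proof fcr_0. assert (fcr s Y (tau_star s Y) < 0) by (rewrite fcr_star; pose proof PI_RGT_0; lra).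
  destruct (first_zero (fcr s Y) 0 (tau_star s Y) Hts Hc H H0 Hz) as [ta [H1 [H2 H3]]].
  destruct (last_zero (fcr s Y) 0 (tau_star s Y) Hts Hc H H0 Hz) as [tb [H4 [H5 H6]]].
  exists ta, tb. repeat split; auto; lra.
Qed.

Lemma pair_eq (a b : R) : (a, b) = RtoC 0 -> a = 0 /\ b = 0.
Proof. intros H. unfold RtoC in H. inversion H. auto. Qed.

Lemma imag_from_cross t : 0 < t < tau_star s Y -> fcr s Y t = 0 -> has_imag_pair s Y t.
Proof.
  intros Ht Hf.
  set (x := xplus s Y t).
  assert (Hx: 0 < x < 1/3) by (split; [apply xplus_pos; lra | apply x_lt_third; lra]).
  destruct (om_facts s x Hs Hx) as [Hw [HF Hw2]].
  destruct (angle_facts s x Hs Hx) as [Hth [Hc [Hsn _]]].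
  set (w := om s x) in *. set (th := acos (hh s x w)) in *.
  assert (Htw: t * w = th) by (unfold fcr in Hf; rewrite omega_plus_eq, theta_eq in Hf; fold x w th in Hf; lra).
  exists w. split; auto.
  rewrite charC_eq. fold x. rewrite Rmult_0_r, Ropp_0, exp_0, Htw.
  assert (HK: 0 < K0 s x w) by (unfold K0; apply Rmult_lt_0_compat; nra).
  destruct (imag_lin_conv s x w (cos th) (sin th) HK ltac:(lra) ltac:(lra)) as [E1 E2].
  rewrite E1, E2. reflexivity.
Qed.

Lemma imag_to_nonneg t : 0 <= t < tau_c s Y -> has_imag_pair s Y t ->
  t < tau_star s Y /\ 0 <= fcr s Y t.
Proof.
  intros Ht [w [Hw Hc]].
  rewrite charC_eq in Hc. rewrite Rmult_0_r, Ropp_0, exp_0 in Hc.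
  apply pair_eq in Hc. destruct Hc as [Hr1 Hr2].
  set (x := xplus s Y t) in *.
  assert (Hx: 0 < x < 1) by (split; [apply xplus_pos; lra | apply x_lt_one; lra]).
  destruct (imag_lin _ _ _ _ _ Hr1 Hr2) as [E1 E2].
  assert (HK: 0 < K0 s x w).
  { unfold K0. assert (0 < s^2) by (apply pow_lt; lra). assert (0 < w^2) by (apply pow_lt; lra).
    assert (0 <= (1-2*x)^2) by apply pow2_ge_0. apply Rmult_lt_0_compat; lra. }
  pose proof (sin2_cos2 (t*w)) as Hsc. unfold Rsqr in Hsc.
  assert (HF: F0 s x w = 0).
  { pose proof (N0norm s x w) as Hn. rewrite <- E1, <- E2 in Hn. fold (K0 s x w) in Hn.
    assert (K0 s x w * K0 s x w * (cos (t*w) * cos (t*w) + sin (t*w) * sin (t*w)) = K0 s x w * (K0 s x w + F0 s x w)) by (rewrite <- Hn; ring).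
    rewrite Rplus_comm, Hsc in H. 
    apply (Rmult_eq_reg_l (K0 s x w)); [|lra]. nra. }
  assert (Hx3: x < 1/3).
  { destruct (Rlt_le_dec x (1/3)); auto. exfalso. unfold F0 in HF.
    assert (0 < w^4) by (apply pow_lt; lra). assert (0 <= x^2*w^2) by nra.
    assert (0 <= s^2*(3*x-1)*(1-x)) by (apply Rmult_le_pos; [apply Rmult_le_pos|]; nra). lra. }
  assert (Hts: t < tau_star s Y) by (apply third_lt_t; auto; lra).
  split; auto.
  assert (Hx': 0 < x < 1/3) by lra.
  destruct (om_facts s x Hs Hx') as [Ho [HFo Ho2]].
  assert (Hwo: w = om s x).
  { apply Rle_antisym; [apply (F0_mono s x w (om s x)) | apply (F0_mono s x (om s x) w)]; lra. }
  destruct (angle_facts s x Hs Hx') as [Hth [_ [_ [Hb Hh]]]].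
  rewrite <- Hwo in Hth, Hb, Hh.
  assert (Hcos: cos (t*w) = hh s x w) by (apply (Rmult_eq_reg_l (K0 s x w)); lra).
  unfold fcr. rewrite omega_plus_eq, theta_eq. fold x. rewrite <- Hwo.
  destruct (Rle_dec (acos (hh s x w)) (t*w)) as [Hle|Hlt]; [lra|exfalso].
  assert (0 <= t*w) by nra.
  pose proof (cos_decreasing_1 (t*w) (acos (hh s x w)) ltac:(lra) ltac:(lra) ltac:(lra) ltac:(lra) ltac:(lra)).
  rewrite cos_acos in H0 by lra. lra.
Qed.

Lemma LAS t : 0 <= t < tau_c s Y -> (tau_star s Y <= t \/ fcr s Y t < 0) -> E_plus_LAS s Y t.
Proof.
  intros Ht Hc [u v] Hl. simpl.
  rewrite charC_eq in Hl. apply pair_eq in Hl. destruct Hl as [Hr1 Hr2].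
  set (x := xplus s Y t) in *.
  destruct (Rlt_le_dec t (tau_star s Y)) as [Hlt|Hge].
  - destruct Hc as [Hc|Hc]; [lra|].
    assert (Hx: 0 < x < 1/3) by (split; [apply xplus_pos; lra | apply x_lt_third; lra]).
    destruct (om_facts s x Hs Hx) as [Hw [HF Hw2]].
    destruct (angle_facts s x Hs Hx) as [Hth [Hcos [Hsn _]]].
    unfold fcr in Hc. rewrite omega_plus_eq, theta_eq in Hc. fold x in Hc.
    apply (core s x (om s x) (acos (hh s x (om s x))) t u v); auto; lra.
  - assert (Hx: 1/3 <= x < 1) by (split; [apply x_ge_third; lra | apply x_lt_one; lra]).
    apply (core_big s x t u v); auto; lra.
Qed.

End Main.

Theorem corollary3p5 :
  forall (s Y : R) (N : nat) (M : R),
    0 < s -> 3 * s < Y ->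
    (exists t0, 0 <= t0 <= tau_star s Y /\ M = t0 * omega_plus s Y t0) ->
    (forall t, 0 <= t <= tau_star s Y -> t * omega_plus s Y t <= M) ->
    (2 * INR N + 1) * PI <= M <= 2 * (INR N + 1) * PI ->
    (forall n : nat, (n <= N)%nat ->
       exists t1 t2, t1 < t2 /\ crossing s Y n t1 /\ crossing s Y n t2) /\
    (forall n : nat, (N + 1 <= n)%nat -> forall t, ~ crossing s Y n t) /\
    ((exists (n : nat) (t : R), crossing s Y n t) ->
     exists ta tb : R,
       crossing s Y 0 ta /\ crossing s Y 0 tb /\
       (forall t, crossing s Y 0 t -> ta <= t <= tb) /\
       has_imag_pair s Y ta /\ has_imag_pair s Y tb /\
       (forall t, 0 <= t < tau_c s Y -> has_imag_pair s Y t -> ta <= t <= tb) /\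
       (forall t, (0 <= t < ta \/ tb < t < tau_c s Y) -> E_plus_LAS s Y t)).
Proof.
  intros s Y N M Hs HY [t0 [Ht0 HM]] Hmax [HM1 HM2].
  split; [|split].
  - intros n Hn. apply (two_crossings s Y Hs HY n N M t0); auto.
  - intros n Hn. apply (no_crossing s Y Hs HY n N M Hmax HM2 Hn).
  - intros _.
    destruct (two_crossings s Y Hs HY 0 N M t0 Ht0 HM HM1 (Nat.le_0_l N)) as [t1 [t2 [_ [Hc1 _]]]].
    apply crossing_iff in Hc1. rewrite INR_0 in Hc1.
    assert (Hz: exists z, 0 < z < tau_star s Y /\ fcr s Y z = 0) by (exists t1; split; [apply Hc1| lra]).
    destruct (extremes s Y Hs HY Hz) as [ta [tb [Hta [Htb [Hfa [Hfb [Hlt Hgt]]]]]]].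
    assert (Hsc: tau_star s Y < tau_c s Y).
    { destruct (Rlt_le_dec (tau_star s Y) (tau_c s Y)) as [H|H]; auto.
      apply (xplus_le s Y Hs HY) in H. rewrite xplus_star, xplus_c in H by lra. lra. }
    exists ta, tb.
    split; [|split; [|split; [|split; [|split; [|split]]]]].
    + apply crossing_iff; auto. rewrite INR_0. split; auto. lra.
    + apply crossing_iff; auto. rewrite INR_0. split; auto. lra.
    + intros t Hc. apply crossing_iff in Hc; auto. rewrite INR_0 in Hc. destruct Hc as [Ht Hf].
      split.
      * destruct (Rlt_le_dec t ta); auto. pose proof (Hlt t ltac:(lra)). lra.
      * destruct (Rle_lt_dec t tb); auto. pose proof (Hgt t ltac:(lra)). lra.
    + apply imag_from_cross; auto.
    + apply imag_from_cross; auto.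
    + intros t Ht Hi. destruct (imag_to_nonneg s Y Hs HY t Ht Hi) as [Ht1 Hf].
      split.
      * destruct (Rlt_le_dec t ta); auto. pose proof (Hlt t ltac:(lra)). lra.
      * destruct (Rle_lt_dec t tb); auto. pose proof (Hgt t ltac:(lra)). lra.
    + intros t [Ht|Ht].
      * apply (LAS s Y Hs HY t). lra. right. apply Hlt. lra.
      * apply (LAS s Y Hs HY t). lra. destruct (Rle_lt_dec t (tau_star s Y)).
        right. apply Hgt. lra. left. lra.
Qed.
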